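(* Let $\mathbf K$ be an M$\Delta$C, let $\operatorname{Rad}\mathbf K$ be its prime radical and $\mathbf N=\{A\in\mathbf K: A^{\otimes n}\cong0\text{ for some }n\ge1\}$. Then: (a) $\operatorname{Rad}\mathbf K\subseteq\mathbf N$; (b) if $\mathbf K$ has at least one completely prime ideal, then $\operatorname{Rad}\mathbf K\subseteq\mathbf N\subseteq\operatorname{CP\text{-}Rad}\mathbf K$; (c) if $\mathbf K$ is symmetric monoidal, then $\operatorname{Rad}\mathbf K=\mathbf N=\operatorname{CP\text{-}Rad}\mathbf K$.
   Context: M$\Delta$C: triangulated category with monoidal structure $(\otimes,\mathbf 1)$, $\otimes$ exact in each variable. Thick ideal: full triangulated subcategory closed under summands and two-sided tensoring with arbitrary objects. A prime ideal is a proper thick ideal $\mathbf P$ with $\mathbf I\otimes\mathbf J\subseteq\mathbf P\Rightarrow\mathbf I\subseteq\mathbf P$ or $\mathbf J\subseteq\mathbf P$ for thick ideals $\mathbf I,\mathbf J$; the prime radical $\operatorname{Rad}\mathbf K$ is the intersection of all prime ideals. A completely prime ideal is a proper thick ideal $\mathbf P$ such that $A\otimes B\in\mathbf P$ implies $A\in\mathbf P$ or $B\in\mathbf P$; $\operatorname{CP\text{-}Rad}\mathbf K$ is the intersection of all completely prime ideals. *)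

(* Defs.v *)
From HB Require Import structures.
From mathcomp Require Import all_boot all_algebra.
Set Implicit Arguments. Unset Strict Implicit. Unset Printing Implicit Defensive.
Import GRing.Theory.
Local Open Scope ring_scope.

Record PreaddCat := {
  Ob :> Type;
  hom : Ob -> Ob -> zmodType;
  idm : forall X, hom X X;
  comp : forall X Y Z, hom Y Z -> hom X Y -> hom X Z;
  comp_assoc : forall X Y Z W (h : hom Z W) (g : hom Y Z) (f : hom X Y),
      comp h (comp g f) = comp (comp h g) f;
  comp_idl : forall X Y (f : hom X Y), comp (idm Y) f = f;
  comp_idr : forall X Y (f : hom X Y), comp f (idm X) = f;
  compDl : forall X Y Z (g g' : hom Y Z) (f : hom X Y),
      comp (g + g') f = comp g f + comp g' f;
  compDr : forall X Y Z (g : hom Y Z) (f f' : hom X Y),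
      comp g (f + f') = comp g f + comp g f';
  zero_ob : Ob;
  zero_ob_zero : idm zero_ob = 0;
  biproducts : forall X Y, exists (S : Ob) (i1 : hom X S) (i2 : hom Y S)
      (p1 : hom S X) (p2 : hom S Y),
      [/\ comp p1 i1 = idm X, comp p2 i2 = idm Y,
          comp p1 i2 = 0, comp p2 i1 = 0
        & comp i1 p1 + comp i2 p2 = idm S]
}.

Arguments hom {p} : rename.
Arguments idm {p} : rename.
Arguments zero_ob {p} : rename.

Definition cmp {C : PreaddCat} {X Y Z : C} (g : hom Y Z) (f : hom X Y) : hom X Z :=
  comp g f.

Definition isIso {C : PreaddCat} {X Y : C} (f : hom X Y) : Prop :=
  exists g : hom Y X, cmp g f = idm X /\ cmp f g = idm Y.

Definition iso {C : PreaddCat} (X Y : C) : Prop := exists f : hom X Y, isIso f.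

(* Triangulated structure (TR1-TR4, Neeman style)                      *)
Record TriStruct (C : PreaddCat) := {
  sh : C -> C;
  shm : forall X Y : C, hom X Y -> hom (sh X) (sh Y);
  shm_id : forall X : C, shm (idm X) = idm (sh X);
  shm_comp : forall (X Y Z : C) (g : hom Y Z) (f : hom X Y),
      shm (cmp g f) = cmp (shm g) (shm f);
  shm_add : forall (X Y : C) (f g : hom X Y), shm (f + g) = shm f + shm g;
  sh_full : forall (X Y : C) (g : hom (sh X) (sh Y)), exists f, shm f = g;
  sh_faithful : forall (X Y : C) (f f' : hom X Y), shm f = shm f' -> f = f';
  sh_esurj : forall Y : C, exists X, iso (sh X) Y;
  dist : forall X Y Z : C, hom X Y -> hom Y Z -> hom Z (sh X) -> Prop;
  TR1a : forall X : C, dist (idm X) (0 : hom X zero_ob) 0;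
  TR1b : forall (X Y : C) (f : hom X Y), exists Z (g : hom Y Z) (h : hom Z (sh X)),
      dist f g h;
  TR1c : forall (X Y Z X' Y' Z' : C) (f : hom X Y) (g : hom Y Z) (h : hom Z (sh X))
      (f' : hom X' Y') (g' : hom Y' Z') (h' : hom Z' (sh X'))
      (a : hom X X') (b : hom Y Y') (c : hom Z Z'),
      isIso a -> isIso b -> isIso c ->
      cmp b f = cmp f' a -> cmp c g = cmp g' b -> cmp (shm a) h = cmp h' c ->
      dist f g h -> dist f' g' h';
  TR2 : forall (X Y Z : C) (f : hom X Y) (g : hom Y Z) (h : hom Z (sh X)),
      dist f g h <-> dist g h (- shm f);
  TR3 : forall (X Y Z X' Y' Z' : C) (f : hom X Y) (g : hom Y Z) (h : hom Z (sh X))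
      (f' : hom X' Y') (g' : hom Y' Z') (h' : hom Z' (sh X'))
      (u : hom X X') (v : hom Y Y'),
      dist f g h -> dist f' g' h' -> cmp v f = cmp f' u ->
      exists w : hom Z Z', cmp w g = cmp g' v /\ cmp (shm u) h = cmp h' w;
  TR4 : forall (X Y Z Z' X' Y' : C) (f : hom X Y) (g : hom Y Z)
      (f1 : hom Y Z') (f2 : hom Z' (sh X))
      (g1 : hom Z X') (g2 : hom X' (sh Y))
      (h1 : hom Z Y') (h2 : hom Y' (sh X)),
      dist f f1 f2 -> dist g g1 g2 -> dist (cmp g f) h1 h2 ->
      exists (u : hom Z' Y') (v : hom Y' X'),
        [/\ dist u v (cmp (shm f1) g2), cmp u f1 = cmp h1 g, cmp h2 u = f2,
            cmp v h1 = g1 & cmp g2 v = cmp (shm f) h2]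
}.

Arguments sh {C} t.
Arguments shm {C} t {X Y}.
Arguments dist {C} t {X Y Z}.

Record MonStruct (C : PreaddCat) (T : TriStruct C) := {
  tens : C -> C -> C;
  tensm : forall A A' B B' : C, hom A A' -> hom B B' -> hom (tens A B) (tens A' B');
  tensm_id : forall A B : C, tensm (idm A) (idm B) = idm (tens A B);
  tensm_comp : forall (A A' A'' B B' B'' : C) (f : hom A A') (f' : hom A' A'')
      (g : hom B B') (g' : hom B' B''),
      tensm (cmp f' f) (cmp g' g) = cmp (tensm f' g') (tensm f g);
  tensm_addl : forall (A A' B B' : C) (f f' : hom A A') (g : hom B B'),
      tensm (f + f') g = tensm f g + tensm f' g;
  tensm_addr : forall (A A' B B' : C) (f : hom A A') (g g' : hom B B'),
      tensm f (g + g') = tensm f g + tensm f g';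
  unit : C;
  assoc : forall A B D : C, hom (tens (tens A B) D) (tens A (tens B D));
  assoc_iso : forall A B D : C, isIso (assoc A B D);
  assoc_nat : forall (A A' B B' D D' : C) (f : hom A A') (g : hom B B') (h : hom D D'),
      cmp (assoc A' B' D') (tensm (tensm f g) h) = cmp (tensm f (tensm g h)) (assoc A B D);
  lunit : forall A : C, hom (tens unit A) A;
  lunit_iso : forall A : C, isIso (lunit A);
  lunit_nat : forall (A A' : C) (f : hom A A'),
      cmp f (lunit A) = cmp (lunit A') (tensm (idm unit) f);
  runit : forall A : C, hom (tens A unit) A;
  runit_iso : forall A : C, isIso (runit A);
  runit_nat : forall (A A' : C) (f : hom A A'),
      cmp f (runit A) = cmp (runit A') (tensm f (idm unit));
  pentagon : forall A B D E : C,
      cmp (assoc A B (tens D E)) (assoc (tens A B) D E)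
      = cmp (tensm (idm A) (assoc B D E))
            (cmp (assoc A (tens B D) E) (tensm (assoc A B D) (idm E)));
  triangle : forall A B : C,
      cmp (tensm (idm A) (lunit B)) (assoc A unit B) = tensm (runit A) (idm B);
  (* A (x) - is a triangulated functor *)
  lsh : forall A X : C, hom (tens A (sh T X)) (sh T (tens A X));
  lsh_iso : forall A X : C, isIso (lsh A X);
  lsh_nat : forall (A X Y : C) (f : hom X Y),
      cmp (shm T (tensm (idm A) f)) (lsh A X) = cmp (lsh A Y) (tensm (idm A) (shm T f));
  lexact : forall (A X Y Z : C) (f : hom X Y) (g : hom Y Z) (h : hom Z (sh T X)),
      dist T f g h ->
      dist T (tensm (idm A) f) (tensm (idm A) g) (cmp (lsh A X) (tensm (idm A) h));
  (* - (x) A is a triangulated functor *)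
  rsh : forall A X : C, hom (tens (sh T X) A) (sh T (tens X A));
  rsh_iso : forall A X : C, isIso (rsh A X);
  rsh_nat : forall (A X Y : C) (f : hom X Y),
      cmp (shm T (tensm f (idm A))) (rsh A X) = cmp (rsh A Y) (tensm (shm T f) (idm A));
  rexact : forall (A X Y Z : C) (f : hom X Y) (g : hom Y Z) (h : hom Z (sh T X)),
      dist T f g h ->
      dist T (tensm f (idm A)) (tensm g (idm A)) (cmp (rsh A X) (tensm h (idm A)))
}.

Arguments tens {C T} m.
Arguments tensm {C T} m {A A' B B'}.
Arguments assoc {C T} m.
Arguments unit {C T} m.

Record SymStruct (C : PreaddCat) (T : TriStruct C) (M : MonStruct T) := {
  braid : forall A B : C, hom (tens M A B) (tens M B A);
  braid_nat : forall (A A' B B' : C) (f : hom A A') (g : hom B B'),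
      cmp (braid A' B') (tensm M f g) = cmp (tensm M g f) (braid A B);
  braid_invol : forall A B : C, cmp (braid B A) (braid A B) = idm (tens M A B);
  hexagon : forall A B D : C,
      cmp (assoc M B D A) (cmp (braid A (tens M B D)) (assoc M A B D))
      = cmp (tensm M (idm B) (braid A D))
            (cmp (assoc M B A D) (tensm M (braid A B) (idm D)))
}.

Section Ideals.
Variables (C : PreaddCat) (T : TriStruct C) (M : MonStruct T).

Definition thick_ideal (P : C -> Prop) : Prop :=
  [/\ P zero_ob /\ (forall X Y : C, iso X Y -> P X -> P Y),
      (forall X : C, P X <-> P (sh T X)),
      (forall (X Y Z : C) (f : hom X Y) (g : hom Y Z) (h : hom Z (sh T X)),
          dist T f g h -> P X -> P Y -> P Z),
      (forall (X Y : C) (i : hom X Y) (p : hom Y X), cmp p i = idm X -> P Y -> P X)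
    & (forall A B : C, P A -> P (tens M A B) /\ P (tens M B A))].

Definition proper (P : C -> Prop) : Prop := exists X : C, ~ P X.

Definition prime_ideal (P : C -> Prop) : Prop :=
  [/\ thick_ideal P, proper P &
      forall I J : C -> Prop, thick_ideal I -> thick_ideal J ->
        (forall A B : C, I A -> J B -> P (tens M A B)) ->
        (forall A, I A -> P A) \/ (forall B, J B -> P B)].

Definition completely_prime_ideal (P : C -> Prop) : Prop :=
  [/\ thick_ideal P, proper P &
      forall A B : C, P (tens M A B) -> P A \/ P B].

Definition Rad (A : C) : Prop := forall P, prime_ideal P -> P A.
Definition CPRad (A : C) : Prop := forall P, completely_prime_ideal P -> P A.

(* tpow A n = A^{(x)(n+1)} = (..(A (x) A) (x) ..) (x) A *)
Fixpoint tpow (A : C) (n : nat) : C :=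
  match n with O => A | S k => tens M (tpow A k) A end.

Definition tnilpotent (A : C) : Prop := exists n : nat, iso (tpow A n) zero_ob.

End Ideals.

(* Main.v *)
Require Import Defs.
From HB Require Import structures.
From mathcomp Require Import all_boot all_algebra.
From mathcomp Require classical_sets.
From Stdlib Require Import Classical.
Set Implicit Arguments. Unset Strict Implicit. Unset Printing Implicit Defensive.
Import GRing.Theory.
Local Open Scope ring_scope.
Local Notation hom := (@Defs.hom _).
Local Notation idm := (@Defs.idm _).

Lemma xx0 (V : zmodType) (x : V) : x = x + x -> x = 0.
Proof. by move=> h; have := congr1 (fun t => t - x) h; rewrite addrK subrr. Qed.

Lemma comp0l (C : PreaddCat) (X Y Z : C) (f : hom X Y) : cmp (0 : hom Y Z) f = 0.
Proof. apply: xx0; rewrite /cmp -compDl addr0 //. Qed.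

Lemma comp0r (C : PreaddCat) (X Y Z : C) (g : hom Y Z) : cmp g (0 : hom X Y) = 0.
Proof. apply: xx0; rewrite /cmp -compDr addr0 //. Qed.

Lemma cmpA (C : PreaddCat) (X Y Z W : C) (h : hom Z W) (g : hom Y Z) (f : hom X Y) :
  cmp h (cmp g f) = cmp (cmp h g) f.
Proof. exact: comp_assoc. Qed.

Lemma cmp1l (C : PreaddCat) (X Y : C) (f : hom X Y) : cmp (idm Y) f = f.
Proof. exact: comp_idl. Qed.
Lemma cmp1r (C : PreaddCat) (X Y : C) (f : hom X Y) : cmp f (idm X) = f.
Proof. exact: comp_idr. Qed.

Lemma zero_src (C : PreaddCat) (X Y : C) (f : hom X Y) : idm X = 0 -> f = 0.
Proof. by move=> h; rewrite -(cmp1r f) h comp0r. Qed.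
Lemma zero_tgt (C : PreaddCat) (X Y : C) (f : hom X Y) : idm Y = 0 -> f = 0.
Proof. by move=> h; rewrite -(cmp1l f) h comp0l. Qed.

Lemma isZ (C : PreaddCat) (X : C) : iso X zero_ob <-> idm X = 0.
Proof.
split.
- move=> [f [g [h1 h2]]]; rewrite -h1 (zero_tgt f) ?comp0r //; exact: zero_ob_zero.
- move=> h; exists 0, 0; split; rewrite comp0l.
  + by rewrite h.
  + by rewrite zero_ob_zero.
Qed.

Lemma iso_refl (C : PreaddCat) (X : C) : iso X X.
Proof. by exists (idm X), (idm X); rewrite cmp1l. Qed.

Lemma iso_sym (C : PreaddCat) (X Y : C) : iso X Y -> iso Y X.
Proof. by move=> [f [g [h1 h2]]]; exists g, f. Qed.

Lemma isIso_cmp (C : PreaddCat) (X Y Z : C) (g : hom Y Z) (f : hom X Y) :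
  isIso f -> isIso g -> isIso (cmp g f).
Proof.
move=> [f' [f1 f2]] [g' [g1 g2]]; exists (cmp f' g'); split.
- by rewrite cmpA -(cmpA f') g1 cmp1r.
- by rewrite cmpA -(cmpA g) f2 cmp1r.
Qed.

Lemma iso_trans (C : PreaddCat) (X Y Z : C) : iso X Y -> iso Y Z -> iso X Z.
Proof. by move=> [f hf] [g hg]; exists (cmp g f); apply: isIso_cmp. Qed.

Lemma isIso_inv (C : PreaddCat) (X Y : C) (f : hom X Y) :
  isIso f -> exists g : hom Y X, isIso g /\ cmp g f = idm X /\ cmp f g = idm Y.
Proof. by move=> [g [h1 h2]]; exists g; split => //; exists f. Qed.

Lemma shm0 (C : PreaddCat) (T : TriStruct C) (X Y : C) : shm T (0 : hom X Y) = 0.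
Proof. by apply: xx0; rewrite -shm_add addr0. Qed.

Lemma tensm0l (C : PreaddCat) (T : TriStruct C) (M : MonStruct T) (A A' B B' : C)
  (g : hom B B') : tensm M (0 : hom A A') g = 0.
Proof. by apply: xx0; rewrite -tensm_addl addr0. Qed.

Lemma isIso_tensm (C : PreaddCat) (T : TriStruct C) (M : MonStruct T) (A A' B B' : C)
  (f : hom A A') (g : hom B B') : isIso f -> isIso g -> isIso (tensm M f g).
Proof.
move=> [f' [f1 f2]] [g' [g1 g2]]; exists (tensm M f' g'); split.
- by rewrite -tensm_comp f1 g1 tensm_id.
- by rewrite -tensm_comp f2 g2 tensm_id.
Qed.

Lemma iso_tens (C : PreaddCat) (T : TriStruct C) (M : MonStruct T) (A A' B B' : C) :
  iso A A' -> iso B B' -> iso (tens M A B) (tens M A' B').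
Proof. by move=> [f hf] [g hg]; exists (tensm M f g); apply: isIso_tensm. Qed.

Lemma iso_assoc (C : PreaddCat) (T : TriStruct C) (M : MonStruct T) (A B D : C) :
  iso (tens M (tens M A B) D) (tens M A (tens M B D)).
Proof. by exists (assoc M A B D); apply: assoc_iso. Qed.

Lemma tri_exact (C : PreaddCat) (T : TriStruct C) (X Y Z W : C)
  (f : hom X Y) (g : hom Y Z) (h : hom Z (sh T X)) (u : hom Z W) :
  dist T f g h -> cmp u g = 0 -> exists k : hom (sh T X) W, cmp k h = u.
Proof.
move=> Hd Hug.
have [Q [e He]] := sh_esurj T (zero_ob : C).
have [e' [He' [e1 e2]]] := isIso_inv He.
have D1 : dist T (idm W) (0 : hom W (sh T Q)) (0 : hom (sh T Q) (sh T W)).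
  apply: (TR1c (a := idm W) (b := idm W) (c := e') _ _ _ _ _ _ (TR1a T W)).
  - by exists (idm W); rewrite cmp1l.
  - by exists (idm W); rewrite cmp1l.
  - exact: He'.
  - by rewrite ?cmp1l ?cmp1r.
  - by rewrite comp0l comp0r.
  - by rewrite comp0l comp0r.
have D2 : dist T (0 : hom Q W) (idm W) (0 : hom W (sh T Q)).
  by apply/TR2; rewrite shm0 oppr0.
have D3 : dist T g h (- shm T f) := proj1 (TR2 _ _ _) Hd.
have E : cmp u g = cmp (0 : hom Q W) (0 : hom Y Q) by rewrite Hug comp0r.
have [w [w1 w2]] := TR3 D3 D2 E.
by exists w; rewrite w1 cmp1l.
Qed.

Lemma thick_ext (C : PreaddCat) (T : TriStruct C) (M : MonStruct T) (P Q : C -> Prop) :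
  thick_ideal M P -> (forall X, P X <-> Q X) -> thick_ideal M Q.
Proof.
move=> [[H0 Hi] Hs Ht Hr Hx] E; split.
- split; first exact/E.
  by move=> X Y XY /E QX; apply/E; apply: Hi XY QX.
- by move=> X; rewrite -!E.
- by move=> X Y Z f g h D /E PX /E PY; apply/E; apply: Ht D PX PY.
- by move=> X Y i p pi /E PY; apply/E; apply: Hr pi PY.
- by move=> A B /E PA; have [? ?] := Hx A B PA; split; apply/E.
Qed.

Lemma thick_iso (C : PreaddCat) (T : TriStruct C) (M : MonStruct T) (P : C -> Prop)
  (X Y : C) : thick_ideal M P -> iso X Y -> P X -> P Y.
Proof. by move=> [[_ Hi] _ _ _ _]; apply: Hi. Qed.

Lemma thick_tl (C : PreaddCat) (T : TriStruct C) (M : MonStruct T) (P : C -> Prop)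
  (A B : C) : thick_ideal M P -> P A -> P (tens M A B).
Proof. by move=> [_ _ _ _ Hx] PA; case: (Hx A B PA). Qed.

Lemma thick_tr (C : PreaddCat) (T : TriStruct C) (M : MonStruct T) (P : C -> Prop)
  (A B : C) : thick_ideal M P -> P A -> P (tens M B A).
Proof. by move=> [_ _ _ _ Hx] PA; case: (Hx A B PA). Qed.

Lemma thick_0 (C : PreaddCat) (T : TriStruct C) (M : MonStruct T) (P : C -> Prop) :
  thick_ideal M P -> P zero_ob.
Proof. by move=> [[H0 _] _ _ _ _]. Qed.

Definition gen (C : PreaddCat) (T : TriStruct C) (M : MonStruct T) (Q : C -> Prop) (X : C) :=
  forall R, thick_ideal M R -> (forall Y, Q Y -> R Y) -> R X.

Lemma gen_thick (C : PreaddCat) (T : TriStruct C) (M : MonStruct T) (Q : C -> Prop) :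
  thick_ideal M (gen M Q).
Proof.
split.
- split; first by move=> R [[H0 _] _ _ _ _].
  by move=> X Y XY GX R HR HQ; apply: (thick_iso HR XY); apply: GX.
- move=> X; split=> GX R HR HQ; have [_ Hs _ _ _] := HR; [apply/(Hs X)|apply/(Hs X)]; exact: GX.
- move=> X Y Z f g h D GX GY R HR HQ; have [_ _ Ht _ _] := HR.
  by apply: (Ht _ _ _ _ _ _ D); [apply: GX|apply: GY].
- move=> X Y i p pi GY R HR HQ; have [_ _ _ Hr _] := HR.
  by apply: (Hr _ _ _ _ pi); apply: GY.
- move=> A B GA; split=> R HR HQ.
  + exact: (thick_tl _ HR (GA R HR HQ)).
  + exact: (thick_tr _ HR (GA R HR HQ)).
Qed.

Lemma gen_in (C : PreaddCat) (T : TriStruct C) (M : MonStruct T) (Q : C -> Prop) X :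
  Q X -> gen M Q X.
Proof. by move=> QX R _ HQ; apply: HQ. Qed.

Lemma gen_min (C : PreaddCat) (T : TriStruct C) (M : MonStruct T) (Q R : C -> Prop) X :
  thick_ideal M R -> (forall Y, Q Y -> R Y) -> gen M Q X -> R X.
Proof. by move=> HR HQ GX; apply: GX. Qed.

Lemma thick_union (C : PreaddCat) (T : TriStruct C) (M : MonStruct T)
  (G : (C -> Prop) -> Prop) :
  (exists R, G R) -> (forall R, G R -> thick_ideal M R) ->
  (forall R1 R2, G R1 -> G R2 -> exists R3, [/\ G R3, (forall X, R1 X -> R3 X) &
                                               (forall X, R2 X -> R3 X)]) ->
  thick_ideal M (fun X => exists R, G R /\ R X).
Proof.
move=> [R0 G0] Hth Hdir; split.
- split; first by exists R0; split => //; apply: thick_0 (Hth _ G0).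
  by move=> X Y XY [R [GR RX]]; exists R; split => //; apply: thick_iso (Hth _ GR) XY RX.
- move=> X; split=> -[R [GR RX]]; exists R; split => //; have [_ Hs _ _ _] := Hth _ GR;
  [exact/(Hs X)|exact/(Hs X)].
- move=> X Y Z f g h D [R1 [G1 R1X]] [R2 [G2 R2Y]].
  have [R3 [G3 H1 H2]] := Hdir _ _ G1 G2.
  exists R3; split => //; have [_ _ Ht _ _] := Hth _ G3.
  by apply: (Ht _ _ _ _ _ _ D); [apply: H1|apply: H2].
- move=> X Y i p pi [R [GR RY]]; exists R; split => //.
  have [_ _ _ Hr _] := Hth _ GR; exact: Hr pi RY.
- move=> A B [R [GR RA]]; split; exists R; split => //.
  + exact: thick_tl (Hth _ GR) RA.
  + exact: thick_tr (Hth _ GR) RA.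
Qed.

Lemma zero_thick (C : PreaddCat) (T : TriStruct C) (M : MonStruct T) :
  thick_ideal M (fun X => iso X zero_ob).
Proof.
apply: (@thick_ext _ _ _ (fun X : C => idm X = 0)); last by move=> X; rewrite isZ.
split.
- split; first exact: zero_ob_zero.
  move=> X Y [f [g [h1 h2]]] HX; rewrite -h2 (zero_src f HX) comp0l //.
- move=> X; split=> HX.
  + by rewrite -shm_id HX shm0.
  + by apply: (@sh_faithful _ T); rewrite shm_id shm0.
- move=> X Y Z f g h D HX HY.
  have [k Hk] := tri_exact (u := idm Z) D (etrans (cmp1l g) (zero_src g HY)).
  rewrite -Hk (zero_tgt h) ?comp0r //.
  by rewrite -shm_id HX shm0.
- move=> X Y i p pi HY; rewrite -pi (zero_src p HY) comp0l //.
- by move=> A B HA; split; rewrite -tensm_id HA ?tensm0l //; apply: xx0; rewrite -tensm_addr addr0.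
Qed.

Lemma iso_lsh (C : PreaddCat) (T : TriStruct C) (M : MonStruct T) (X B : C) :
  iso (tens M X (sh T B)) (sh T (tens M X B)).
Proof. exact: (ex_intro _ (lsh M X B) (lsh_iso M X B)). Qed.

Lemma iso_rsh (C : PreaddCat) (T : TriStruct C) (M : MonStruct T) (X B : C) :
  iso (tens M (sh T X) B) (sh T (tens M X B)).
Proof. exact: (ex_intro _ (rsh M B X) (rsh_iso M B X)). Qed.

Lemma RL_thick (C : PreaddCat) (T : TriStruct C) (M : MonStruct T) (P I : C -> Prop) :
  thick_ideal M P -> (forall X Y, I X -> I (tens M X Y)) ->
  thick_ideal M (fun B => forall X, I X -> P (tens M X B)).
Proof.
move=> HP HI; have [[H0 Hi] Hs Ht Hr Hx] := HP; split.
- split; first by move=> X _; apply: thick_tr HP H0.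
  move=> B B' BB' HB X IX; apply: thick_iso HP _ (HB X IX); apply: iso_tens (iso_refl X) BB'.
- move=> B; split=> HB X IX.
  + exact: (thick_iso HP (iso_sym (iso_lsh M X B)) (proj1 (Hs _) (HB X IX))).
  + apply/(Hs (tens M X B)); exact: (thick_iso HP (iso_lsh M X B) (HB X IX)).
- move=> B1 B2 B3 f g h D H1 H2 X IX.
  exact: (Ht _ _ _ _ _ _ (lexact M X D) (H1 X IX) (H2 X IX)).
- move=> B1 B2 i p pi H2 X IX.
  apply: (Hr _ _ (tensm M (idm X) i) (tensm M (idm X) p) _ (H2 X IX)).
  by rewrite -tensm_comp cmp1l pi tensm_id.
- move=> B Y HB; split=> X IX.
  + exact: (thick_iso HP (iso_assoc M X B Y) (thick_tl _ HP (HB X IX))).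
  + exact: (thick_iso HP (iso_assoc M X Y B) (HB _ (HI X Y IX))).
Qed.

Lemma LL_thick (C : PreaddCat) (T : TriStruct C) (M : MonStruct T) (P J : C -> Prop) :
  thick_ideal M P -> (forall X Y, J X -> J (tens M Y X)) ->
  thick_ideal M (fun X => forall B, J B -> P (tens M X B)).
Proof.
move=> HP HJ; have [[H0 Hi] Hs Ht Hr Hx] := HP; split.
- split; first by move=> B _; apply: thick_tl HP H0.
  move=> X X' XX' HX B JB; apply: thick_iso HP _ (HX B JB); apply: iso_tens XX' (iso_refl B).
- move=> X; split=> HX B JB.
  + exact: (thick_iso HP (iso_sym (iso_rsh M X B)) (proj1 (Hs _) (HX B JB))).
  + apply/(Hs (tens M X B)); exact: (thick_iso HP (iso_rsh M X B) (HX B JB)).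
- move=> X1 X2 X3 f g h D H1 H2 B JB.
  exact: (Ht _ _ _ _ _ _ (rexact M B D) (H1 B JB) (H2 B JB)).
- move=> X1 X2 i p pi H2 B JB.
  apply: (Hr _ _ (tensm M i (idm B)) (tensm M p (idm B)) _ (H2 B JB)).
  by rewrite -tensm_comp cmp1l pi tensm_id.
- move=> X Y HX; split=> B JB.
  + exact: (thick_iso HP (iso_sym (iso_assoc M X Y B)) (HX _ (HJ B Y JB))).
  + exact: (thick_iso HP (iso_sym (iso_assoc M Y X B)) (thick_tr _ HP (HX B JB))).
Qed.

Lemma key (C : PreaddCat) (T : TriStruct C) (M : MonStruct T) (P I J : C -> Prop) :
  thick_ideal M P -> thick_ideal M I -> thick_ideal M J ->
  (forall A B, I A -> J B -> P (tens M A B)) ->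
  forall A B, gen M (fun X => P X \/ I X) A -> gen M (fun X => P X \/ J X) B ->
  P (tens M A B).
Proof.
move=> HP HI HJ HIJ A B GA GB.
have R1 := @RL_thick _ _ M P I HP (fun X Y IX => thick_tl _ HI IX).
have H1 : forall B', gen M (fun X => P X \/ J X) B' -> forall X, I X -> P (tens M X B').
  move=> B' GB'; apply: (gen_min R1 _ GB') => Y [PY|JY] X IX.
  + exact: thick_tr HP PY.
  + exact: HIJ.
have R2 := @LL_thick _ _ M P (gen M (fun X => P X \/ J X)) HP
  (fun X Y GX => thick_tr _ (gen_thick M _) GX).
apply: (gen_min R2 _ GA B GB) => Y [PY|IY] B' GB'.
- exact: thick_tl HP PY.
- exact: H1.
Qed.

Lemma tpow_mul (C : PreaddCat) (T : TriStruct C) (M : MonStruct T) (A : C) (m n : nat) :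
  iso (tens M (tpow M A m) (tpow M A n)) (tpow M A (m + n).+1).
Proof.
elim: n => [|n IH]; first by rewrite addn0 /=; exact: iso_refl.
rewrite addnS /=.
apply: iso_trans (iso_sym (iso_assoc _ _ _ _)) _.
exact: iso_tens IH (iso_refl A).
Qed.

Lemma tpow_up (C : PreaddCat) (T : TriStruct C) (M : MonStruct T) (Q : C -> Prop) (A : C)
  (n k : nat) : thick_ideal M Q -> Q (tpow M A n) -> Q (tpow M A (n + k)).
Proof.
move=> HQ Hn; elim: k => [|k IH]; first by rewrite addn0.
by rewrite addnS /=; apply: thick_tl HQ IH.
Qed.

Lemma exists_prime (C : PreaddCat) (T : TriStruct C) (M : MonStruct T) (A : C) :
  ~ tnilpotent M A -> exists P, prime_ideal M P /\ ~ P A.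
Proof.
move=> NA.
pose Z := fun X : C => iso X zero_ob.
have HZ : forall n, ~ Z (tpow M A n) by move=> n h; apply: NA; exists n.
have HZt : thick_ideal M Z := zero_thick M.
pose F : classical_sets.set (classical_sets.set C) := fun Q =>
  thick_ideal M (fun X => Q X \/ Z X) /\ forall n, ~ Q (tpow M A n).
have [Q0 [[HQ0 DQ0] Qmax]] : exists Q, F Q /\ forall B, classical_sets.proper Q B -> ~ F B.
  apply: classical_sets.Zorn_bigcup => Fm FmF Ftot; split.
  - pose G := fun R : C -> Prop => (forall X, R X <-> Z X) \/
      exists Q, Fm Q /\ forall X, R X <-> (Q X \/ Z X).
    have GZ : forall R, G R -> forall X, Z X -> R X.
      by move=> R [HR|[Q [_ HR]]] X ZX; apply/HR => //; right.
    apply: (@thick_ext _ _ M (fun X => exists R, G R /\ R X)).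
    + apply: thick_union.
      * by exists Z; left.
      * move=> R [HR|[Q [FQ HR]]].
        -- by apply: thick_ext HZt _ => X; rewrite HR.
        -- by apply: thick_ext (proj1 (FmF Q FQ)) _ => X; rewrite HR.
      * move=> R1 R2 G1 G2.
        case: G1 => [H1|[Q1 [F1 H1]]].
          exists R2; split => //; by move=> X /H1; apply: GZ.
        have G1 : G R1 by right; exists Q1.
        case: G2 => [H2|[Q2 [F2 H2]]].
          exists R1; split => //; by move=> X /H2; apply: GZ.
        case: (Ftot _ _ F1 F2) => S12.
        -- exists R2; split => //; first by right; exists Q2.
           by move=> X /H1 [/S12 QX|ZX]; apply/H2; [left|right].
        -- exists R1; split => //.
           by move=> X /H2 [/S12 QX|ZX]; apply/H1; [left|right].
    + move=> X; split.
      * move=> [R [[HR|[Q [FQ HR]]] RX]]; first by right; apply/HR.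
        by case/HR: RX => [QX|ZX]; [left; exists Q|right].
      * move=> [[Q FQ QX]|ZX].
        -- by exists (fun X => Q X \/ Z X); split; [right; exists Q|left].
        -- by exists Z; split => //; left.
  - by move=> n [Q FQ Qn]; exact: (proj2 (FmF Q FQ) n Qn).
pose P := fun X => Q0 X \/ Z X.
have nPA : forall n, ~ P (tpow M A n) by move=> n [/DQ0|/HZ].
exists P; split; last exact: (nPA 0%N).
split => //; first by exists A; exact: (nPA 0%N).
move=> I J HI HJ HIJ.
have ext : forall I, ~ (forall X, I X -> P X) ->
    exists n, gen M (fun X => P X \/ I X) (tpow M A n).
  move=> I' nI; apply: NNPP => nG.
  have [X HX] := not_all_ex_not _ _ nI.
  have [IX nPX] := imply_to_and _ _ HX.
  apply: (Qmax (gen M (fun X => P X \/ I' X))).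
  - split; first by move=> Y QY; apply: gen_in; left; left.
    by move=> sub; apply: nPX; left; apply: sub; apply: gen_in; right.
  - split.
    + apply: (thick_ext (gen_thick M (fun X => P X \/ I' X))) => Y; split; first by left.
      by case=> // ZY; apply: gen_in; left; right.
    + by move=> n Gn; apply: nG; exists n.
apply: NNPP => Hn; have [nI nJ] := not_or_and _ _ Hn.
have [n Hn'] := ext I nI; have [m Hm'] := ext J nJ.
have := key HQ0 HI HJ HIJ (tpow_up m (gen_thick M _) Hn') (tpow_up n (gen_thick M _) Hm').
move=> Pt; apply: (nPA ((n + m) + (m + n)).+1); exact: thick_iso HQ0 (tpow_mul M A _ _) Pt.
Qed.

Lemma nil_cp (C : PreaddCat) (T : TriStruct C) (M : MonStruct T) (P : C -> Prop) (A : C) :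
  completely_prime_ideal M P -> tnilpotent M A -> P A.
Proof.
move=> [HP _ Hcp] [n Hn].
have Pn : P (tpow M A n) by exact: (thick_iso HP (iso_sym Hn) (thick_0 HP)).
elim: n Pn {Hn} => [|n IH] //= Pn.
by case: (Hcp _ _ Pn) => // /IH.
Qed.

Lemma iso_braid (C : PreaddCat) (T : TriStruct C) (M : MonStruct T) (S : SymStruct M)
  (A B : C) : iso (tens M A B) (tens M B A).
Proof. by exists (braid S A B), (braid S B A); rewrite !braid_invol. Qed.

Lemma K_thick (C : PreaddCat) (T : TriStruct C) (M : MonStruct T) (S : SymStruct M)
  (P : C -> Prop) (X : C) :
  thick_ideal M P -> thick_ideal M (fun B => P (tens M X B)).
Proof.
move=> HP; have [[H0 Hi] Hs Ht Hr Hx] := HP; split.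
- split; first by apply: thick_tr HP H0.
  move=> B B' BB' HB; apply: thick_iso HP _ HB; apply: iso_tens (iso_refl X) BB'.
- move=> B; split=> HB.
  + exact: (thick_iso HP (iso_sym (iso_lsh M X B)) (proj1 (Hs _) HB)).
  + apply/(Hs (tens M X B)); exact: (thick_iso HP (iso_lsh M X B) HB).
- move=> B1 B2 B3 f g h D H1 H2.
  exact: (Ht _ _ _ _ _ _ (lexact M X D) H1 H2).
- move=> B1 B2 i p pi H2.
  apply: (Hr _ _ (tensm M (idm X) i) (tensm M (idm X) p) _ H2).
  by rewrite -tensm_comp cmp1l pi tensm_id.
- move=> B W HB; split.
  + exact: (thick_iso HP (iso_assoc M X B W) (thick_tl _ HP HB)).
  + apply: (thick_iso HP _ (thick_tr W HP HB)).
    exact: (iso_trans (iso_sym (iso_assoc M W X B))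
      (iso_trans (iso_tens M (iso_braid S W X) (iso_refl B)) (iso_assoc M X W B))).
Qed.

Lemma sym_cp (C : PreaddCat) (T : TriStruct C) (M : MonStruct T) (S : SymStruct M)
  (P : C -> Prop) : prime_ideal M P -> completely_prime_ideal M P.
Proof.
move=> [HP Hpr Hp]; split => // X Y PXY.
have GY : forall B, gen M (fun Z => Z = Y) B -> P (tens M X B).
  by move=> B GB; apply: (gen_min (K_thick S X HP) _ GB) => Z ->.
have HL := @LL_thick _ _ M P (gen M (fun Z => Z = Y)) HP
  (fun B W GB => thick_tr _ (gen_thick M _) GB).
have GX : forall A, gen M (fun Z => Z = X) A -> forall B, gen M (fun Z => Z = Y) B ->
    P (tens M A B).
  by move=> A GA; apply: (gen_min HL _ GA) => Z ->.
case: (Hp _ _ (gen_thick M _) (gen_thick M _) (fun A B GA GB => GX A GA B GB)) => H.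
- by left; apply: H; apply: gen_in.
- by right; apply: H; apply: gen_in.
Qed.

Theorem mainTheorem13 (C : PreaddCat) (T : TriStruct C) (M : MonStruct T) :
  (* (a) *)
  (forall A : C, Rad M A -> tnilpotent M A) /\
  (* (b) *)
  ((exists P : C -> Prop, completely_prime_ideal M P) ->
     (forall A : C, Rad M A -> tnilpotent M A) /\ (forall A : C, tnilpotent M A -> CPRad M A)) /\
  (* (c) *)
  (forall S : SymStruct M,
     (forall A : C, Rad M A <-> tnilpotent M A) /\ (forall A : C, tnilpotent M A <-> CPRad M A)).
Proof.
have a : forall A : C, Rad M A -> tnilpotent M A.
  move=> A RA; apply: NNPP => nA; have [P [HP nPA]] := exists_prime nA.
  exact: nPA (RA P HP).
have b : forall A : C, tnilpotent M A -> CPRad M A.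
  by move=> A nA P HP; exact: nil_cp HP nA.
split => //; split => // S; split => A; split.
- exact: a.
- by move=> nA P HP; exact: nil_cp (sym_cp S HP) nA.
- exact: b.
- move=> CA; apply: NNPP => nA; have [P [HP nPA]] := exists_prime nA.
  exact: nPA (CA P (sym_cp S HP)).
Qed.
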